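(* Let $k>4$ be an odd integer. Then for each $l\in\{2k-2,\,2k-4\}$ there exist permutations $g_1,g_2\in S(l)$ such that each of $g_1,g_2$ has only cycles of length $k$ or $1$, and $g_1g_2^{-1}$ has only cycles of even length.
   Context: $S(l)$ denotes the symmetric group on $\{1,\dots,l\}$. *)

(* Defs.v *)
From mathcomp Require Import all_boot all_fingroup.
Set Implicit Arguments. Unset Strict Implicit. Unset Printing Implicit Defensive.

Definition cycles_k_or_1 (l k : nat) (g : 'S_l) : Prop :=
  forall x : 'I_l, #|porbit g x| = k \/ #|porbit g x| = 1%N.

Definition cycles_even (l : nat) (g : 'S_l) : Prop :=
  forall x : 'I_l, ~~ odd #|porbit g x|.

(* Main.v *)
Require Import Defs.
From mathcomp Require Import all_boot all_fingroup.
From mathcomp Require Import zify.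
Set Implicit Arguments. Unset Strict Implicit. Unset Printing Implicit Defensive.
Ltac crush := simpl; repeat match goal with |- context [if ?c then _ else _] =>
  lazymatch c with context [if _ then _ else _] => fail | _ =>
    let H := fresh "H" in destruct c eqn:H end end; lia.

Lemma exists_perm l (f : nat -> nat) :
  (forall x, x < l -> f x < l) ->
  (forall x y, x < l -> y < l -> f x = f y -> x = y) ->
  exists p : 'S_l, forall x : 'I_l, val (p x) = f x.
Proof.
move=> Hf Hi.
pose fo (x : 'I_l) : 'I_l := Ordinal (Hf x (ltn_ord x)).
have fo_inj : injective fo.
  by move=> x y [] /Hi => H; apply/val_inj/H.
by exists (perm fo_inj) => x; rewrite permE.
Qed.

Lemma porbit_fix l (g : 'S_l) x : g x = x -> #|porbit g x| = 1.
Proof.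
move=> Hx.
have -> : porbit g x = [set x].
  apply/setP => y; rewrite inE; apply/porbitP/eqP => [[i ->]|->]; last by exists 0; rewrite expg0 perm1.
  elim: i => [|i IH]; first by rewrite expg0 perm1.
  by rewrite expgSr permM IH Hx.
by rewrite cards1.
Qed.

Lemma porbit_enum l (g : 'S_l) (e : nat -> nat) m :
  0 < m ->
  (forall i j, i < m -> j < m -> e i = e j -> i = j) ->
  (forall (y : 'I_l) i, i < m -> (y : nat) = e i ->
      val (g y) = e (if i.+1 == m then 0 else i.+1)) ->
  forall (x : 'I_l) i, i < m -> (x : nat) = e i -> #|porbit g x| = m.
Proof.
move=> m0 Hinj Hg x i im xi.
have step : forall j, val ((g ^+ j)%g x) = e ((i + j) %% m).
  elim=> [|j IH]; first by rewrite expg0 perm1 addn0 modn_small.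
  rewrite expgSr permM (Hg _ ((i + j) %% m)) ?ltn_pmod //.
  congr e.
  have -> : (i + j.+1) %% m = ((i + j) %% m).+1 %% m.
    by rewrite addnS -addn1 -modnDml addn1.
  have := ltn_pmod (i + j) m0.
  case: eqP => [->|H] r; first by rewrite modnn.
  move: r H; set q := (i + j) %% m => r H; rewrite (modn_small (_ : q.+1 < m)) //; lia.
have -> : porbit g x = [set (g ^+ (val t))%g x | t : 'I_m].
  apply/setP => y; apply/porbitP/imsetP => [[j ->]|[t _ ->]]; last by exists t.
  exists (Ordinal (ltn_pmod j m0)) => //=.
  apply/val_inj; rewrite !step; congr e.
  by rewrite modnDmr.
rewrite card_imset ?card_ord //.
move=> t1 t2 /(congr1 val); rewrite !step => /Hinj.
rewrite !ltn_pmod //; move=> /(_ isT isT) /eqP.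
rewrite eqn_modDl !modn_small ?ltn_ord // => /eqP H; exact: val_inj.
Qed.

Lemma prod_val l (g1 g2 : 'S_l) (y z : 'I_l) : g2 z = g1 y -> (g1 * g2^-1)%g y = z.
Proof. by move=> H; rewrite permM -H permK. Qed.

Lemma prod_val' l (g1 g2 : 'S_l) (f1 f2 : nat -> nat) :
  (forall x : 'I_l, val (g1 x) = f1 x) -> (forall x : 'I_l, val (g2 x) = f2 x) ->
  forall (y : 'I_l) c, c < l -> f2 c = f1 ((y : nat)) -> val ((g1 * g2^-1)%g y) = c.
Proof.
move=> H1 H2 y c hc E.
by rewrite (@prod_val _ g1 g2 y (Ordinal hc)) //; apply/val_inj; rewrite H1 H2.
Qed.

Lemma caseA n : 2 <= n -> ~~ odd n -> exists g1 g2 : 'S_(n.*2),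
  cycles_k_or_1 n.+1 g1 /\ cycles_k_or_1 n.+1 g2 /\ cycles_even (g1 * g2^-1)%g.
Proof.
move=> n2 ev.
pose f1 := fun x => if x < n then x.+1 else if x == n then 0 else x.
pose f2 := fun x => if x == 0 then n else if (n <= x) && (x < n.*2 - 1) then x.+1
                   else if x == n.*2 - 1 then 0 else x.
have [g1 Hg1] : exists p : 'S_(n.*2), forall x, val (p x) = f1 x.
  by apply: exists_perm => [x hx|x y hx hy]; rewrite /f1; crush.
have [g2 Hg2] : exists p : 'S_(n.*2), forall x, val (p x) = f2 x.
  by apply: exists_perm => [x hx|x y hx hy]; rewrite /f2; crush.
have Hh := prod_val' Hg1 Hg2.
exists g1, g2; split; [|split].
- move=> x; have hx := ltn_ord x; case: (ltnP n ((x : nat))) => H.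
    right; apply: porbit_fix; apply: val_inj; rewrite Hg1 /f1; crush.
  left; apply: (@porbit_enum _ _ (fun i => i) n.+1 _ _ _ x ((x : nat))) => //.
  by move=> y i hi hy; rewrite Hg1 /f1; move: hy => /=; crush.
- move=> x; have hx := ltn_ord x.
  case: (boolP ((0 < (x : nat)) && ((x : nat) < n))) => H.
    right; apply: porbit_fix; apply: val_inj; rewrite Hg2 /f2; move: H; crush.
  left; apply: (@porbit_enum _ _ (fun i => if i < n then n + i else 0) n.+1 _ _ _ x
           (if (x : nat) == 0 then n else (x : nat) - n)) => //.
  + move=> i j hi hj /=; crush.
  + by move=> y i hi hy; rewrite Hg2 /f2; move: hy => /=; crush.
  + move: H; crush.
  + move: H; crush.
- move=> x; have hx := ltn_ord x.
  case: (ltnP ((x : nat)) n) => H.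
    rewrite (@porbit_enum _ _ (fun i => i) n _ _ _ x ((x : nat))) //; first lia.
    by move=> y i hi hy; move: hy => /= hy; apply: Hh; rewrite /f1 /f2; move: hy; crush.
  rewrite (@porbit_enum _ _ (fun i => if i == 0 then n else n.*2 - i) n _ _ _ x
           (if (x : nat) == n then 0 else n.*2 - (x : nat))) //; first lia.
  + move=> i j hi hj /=; crush.
  + by move=> y i hi hy; move: hy => /= hy; apply: Hh; rewrite /f1 /f2; move: hy; crush.
  + crush.
  + crush.
Qed.

Lemma caseB k : 4 < k -> exists g1 g2 : 'S_(k.*2 - 4),
  cycles_k_or_1 k g1 /\ cycles_k_or_1 k g2 /\ cycles_even (g1 * g2^-1)%g.
Proof.
move=> k4.
pose f1 := fun x => if x < k - 1 then x.+1 else if x == k - 1 then 0 else x.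
pose f2 := fun x => if x == k then 0 else if x == 0 then 3 else if x == 3 then 2
   else if x == 2 then 1 else if x == 1 then k.*2 - 5
   else if (k < x) && (x < k.*2 - 4) then x.-1 else x.
have [g1 Hg1] : exists p : 'S_(k.*2 - 4), forall x, val (p x) = f1 x.
  by apply: exists_perm => [x hx|x y hx hy]; rewrite /f1; crush.
have [g2 Hg2] : exists p : 'S_(k.*2 - 4), forall x, val (p x) = f2 x.
  by apply: exists_perm => [x hx|x y hx hy]; rewrite /f2; crush.
have Hh := prod_val' Hg1 Hg2.
exists g1, g2; split; [|split].
- move=> x; have hx := ltn_ord x; case: (ltnP (x : nat) k) => H; last first.
    right; apply: porbit_fix; apply: val_inj; rewrite Hg1 /f1; crush.
  left; apply: (@porbit_enum _ _ (fun i => i) k _ _ _ x (x : nat)) => //; first lia.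
  by move=> y i hi hy; rewrite Hg1 /f1; move: hy => /=; crush.
- move=> x; have hx := ltn_ord x.
  case: (boolP ((4 <= (x : nat)) && ((x : nat) < k))) => H.
    right; apply: porbit_fix; apply: val_inj; rewrite Hg2 /f2; move: H; crush.
  left; apply: (@porbit_enum _ _ (fun i => if i == 0 then k else if i == 1 then 0
      else if i == 2 then 3 else if i == 3 then 2 else if i == 4 then 1 else k.*2 - i) k
      _ _ _ x
      (if (x : nat) == k then 0 else if (x : nat) == 0 then 1 else if (x : nat) == 3 then 2
       else if (x : nat) == 2 then 3 else if (x : nat) == 1 then 4 else k.*2 - x)) => //.
  + lia.
  + move=> i j hi hj /=; crush.
  + by move=> y i hi hy; rewrite Hg2 /f2; move: hy => /=; crush.
  + move: H; crush.
  + move: H; crush.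
- move=> x; have hx := ltn_ord x.
  case: (boolP (((x : nat) == 0) || ((x : nat) == 2))) => H.
    rewrite (@porbit_enum _ _ (fun i => if i == 0 then 0 else 2) 2 _ _ _ x
             (if (x : nat) == 0 then 0 else 1)) //.
    + move=> i j hi hj /=; crush.
    + by move=> y i hi hy; move: hy => /= hy; apply: Hh; rewrite /f1 /f2; move: hy; crush.
    + crush.
    + move: H; crush.
  rewrite (@porbit_enum _ _ (fun i => if i == 0 then 1 else i.+2) (k.*2 - 6) _ _ _ x
           (if (x : nat) == 1 then 0 else x - 2)).
  + by rewrite (_ : k.*2 - 6 = (k - 3).*2) ?odd_double //; lia.
  + lia.
  + move=> i j hi hj /=; crush.
  + by move=> y i hi hy; move: hy => /= hy; apply: Hh; rewrite /f1 /f2; move: hy; crush.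
  + move: H; crush.
  + move: H; crush.
Qed.

Theorem mainTheorem10 (k : nat) :
  odd k -> 4 < k ->
  forall l : nat, (l = k.*2 - 2 \/ l = k.*2 - 4) ->
  exists g1 g2 : 'S_l,
    cycles_k_or_1 k g1 /\ cycles_k_or_1 k g2 /\ cycles_even (g1 * g2^-1)%g.
Proof.
move=> ok k4 l [->|->]; last exact: caseB.
have [m Em] : exists m, k = m.+1 by exists k.-1; lia.
subst k.
have -> : m.+1.*2 - 2 = m.*2 by lia.
apply: caseA; first lia.
by move: ok => /=; case: (odd m).
Qed.
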